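(* Let $\boldsymbol{f}\in\mathbb{R}^E$ satisfy $\boldsymbol{u}^-_e<\boldsymbol{f}_e<\boldsymbol{u}^+_e$ for all $e$ and $\boldsymbol{c}^\top\boldsymbol{f}>F^*$. Let $\tilde{\boldsymbol{g}}\in\mathbb{R}^E$ satisfy $\|\mathbf{L}(\boldsymbol{f})^{-1}(\tilde{\boldsymbol{g}}-\boldsymbol{g}(\boldsymbol{f}))\|_\infty\le\varepsilon$ for some $\varepsilon\in(0,1/2]$, and $\tilde{\boldsymbol{\ell}}\in\mathbb{R}^E_{>0}$ satisfy $\tilde{\boldsymbol{\ell}}\approx_2\boldsymbol{\ell}(\boldsymbol{f})$. Let $\boldsymbol{\Delta}$ satisfy $\mathbf{B}^\top\boldsymbol{\Delta}=0$ and $\tilde{\boldsymbol{g}}^\top\boldsymbol{\Delta}/\|\tilde{\mathbf{L}}\boldsymbol{\Delta}\|_1\le-\kappa$ for some $\kappa\in(0,1)$. Then $\frac{|\boldsymbol{c}^\top\boldsymbol{\Delta}|}{\boldsymbol{c}^\top\boldsymbol{f}-F^*}\le|\tilde{\boldsymbol{g}}^\top\boldsymbol{\Delta}|/(\kappa m)$.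
   Context: Setting: $G=(V,E)$ is a directed graph with $m=|E|$ edges and edge-vertex incidence matrix $\mathbf{B}$ (row of edge $(a,b)$ has $+1$ at $a$, $-1$ at $b$); demands $\boldsymbol{d}\in\mathbb{Z}^V$, lower/upper capacities $\boldsymbol{u}^-,\boldsymbol{u}^+\in\mathbb{Z}^E$, and costs $\boldsymbol{c}\in\mathbb{Z}^E$ are integers bounded in absolute value by $U$. $F^*=\min\{\boldsymbol{c}^\top\boldsymbol{f}:\mathbf{B}^\top\boldsymbol{f}=\boldsymbol{d},\ \boldsymbol{u}^-\le\boldsymbol{f}\le\boldsymbol{u}^+\}$. Let $\alpha=1/(1000\log(mU))$. Lengths $\boldsymbol{\ell}(\boldsymbol{f})_e=(\boldsymbol{u}^+_e-\boldsymbol{f}_e)^{-1-\alpha}+(\boldsymbol{f}_e-\boldsymbol{u}^-_e)^{-1-\alpha}$; gradients $\boldsymbol{g}(\boldsymbol{f})_e=20m(\boldsymbol{c}^\top\boldsymbol{f}-F^* )^{-1}\boldsymbol{c}_e+\alpha(\boldsymbol{u}^+_e-\boldsymbol{f}_e)^{-1-\alpha}-\alpha(\boldsymbol{f}_e-\boldsymbol{u}^-_e)^{-1-\alpha}$ (the gradient of $\Phi(\boldsymbol{f})=20m\log(\boldsymbol{c}^\top\boldsymbol{f}-F^* )+\sum_e((\boldsymbol{u}^+_e-\boldsymbol{f}_e)^{-\alpha}+(\boldsymbol{f}_e-\boldsymbol{u}^-_e)^{-\alpha})$). $\mathbf{L}(\boldsymbol{f})=\mathrm{diag}(\boldsymbol{\ell}(\boldsymbol{f}))$,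 $\tilde{\mathbf{L}}=\mathrm{diag}(\tilde{\boldsymbol{\ell}})$. $\boldsymbol{x}\approx_\beta\boldsymbol{y}$ means $\beta^{-1}\boldsymbol{y}_i\le\boldsymbol{x}_i\le\beta\boldsymbol{y}_i$ for all $i$. *)

(* Defs.v *)
From HB Require Import structures.
From mathcomp Require Import all_boot all_order all_algebra.
From mathcomp Require Import reals exp.
Set Implicit Arguments. Unset Strict Implicit. Unset Printing Implicit Defensive.
Import Order.TTheory GRing.Theory Num.Theory.
Local Open Scope ring_scope.

(* Graph with vertex set 'I_n and edge set 'I_m; edge e goes from tl e to hd e.
   Incidence matrix B : row e has +1 at tl e and -1 at hd e. *)
Definition incidence (R : realType) (m n : nat) (tl hd : 'I_m -> 'I_n)
  (e : 'I_m) (v : 'I_n) : R := ((v == tl e)%:R - (v == hd e)%:R).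

Definition BT (R : realType) (m n : nat) (tl hd : 'I_m -> 'I_n)
  (f : 'I_m -> R) (v : 'I_n) : R := \sum_(e < m) incidence R tl hd e v * f e.

Definition dot (R : realType) (m : nat) (x y : 'I_m -> R) : R :=
  \sum_(e < m) x e * y e.

Definition intv (R : realType) (m : nat) (x : 'I_m -> int) : 'I_m -> R :=
  fun e => (x e)%:~R.

Definition feasible (R : realType) (m n : nat) (tl hd : 'I_m -> 'I_n)
  (d : 'I_n -> int) (lo hi : 'I_m -> int) (f : 'I_m -> R) : Prop :=
  (forall v, BT tl hd f v = (d v)%:~R) /\
  (forall e, (lo e)%:~R <= f e <= (hi e)%:~R).

Definition is_opt_value (R : realType) (m n : nat) (tl hd : 'I_m -> 'I_n)
  (d : 'I_n -> int) (lo hi c : 'I_m -> int) (Fs : R) : Prop :=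
  (exists f, feasible tl hd d lo hi f /\ dot (intv R c) f = Fs) /\
  (forall f, feasible tl hd d lo hi f -> Fs <= dot (intv R c) f).

Definition alpha (R : realType) (m U : nat) : R :=
  1 / (1000 * ln ((m * U)%:R)).

Definition ell (R : realType) (m U : nat) (lo hi : 'I_m -> int)
  (f : 'I_m -> R) (e : 'I_m) : R :=
  powR ((hi e)%:~R - f e) (-1 - alpha R m U) +
  powR (f e - (lo e)%:~R) (-1 - alpha R m U).

Definition grad (R : realType) (m U : nat) (lo hi c : 'I_m -> int) (Fs : R)
  (f : 'I_m -> R) (e : 'I_m) : R :=
  20 * m%:R * (dot (intv R c) f - Fs)^-1 * (c e)%:~R
  + alpha R m U * powR ((hi e)%:~R - f e) (-1 - alpha R m U)
  - alpha R m U * powR (f e - (lo e)%:~R) (-1 - alpha R m U).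

Definition approx (R : realType) (m : nat) (beta : R) (x y : 'I_m -> R) : Prop :=
  forall i, beta^-1 * y i <= x i <= beta * y i.

Definition wnorm1 (R : realType) (m : nat) (w x : 'I_m -> R) : R :=
  \sum_(e < m) `|w e * x e|.

(* Main.v *)
Require Import Defs.
From HB Require Import structures.
From mathcomp Require Import all_boot all_order all_algebra.
From mathcomp Require Import reals exp.
From mathcomp Require Import ring lra.
Import Order.TTheory GRing.Theory Num.Theory.
Local Open Scope ring_scope.

Lemma ln_nat_bound (R : realType) (k : nat) : (2 <= k)%N -> 1/2 <= ln (k%:R : R).
Proof.
move=> hk.
have kp : (0 : R) < k%:R by rewrite ltr0n; case: k hk.
have k2 : (2 : R) <= k%:R by rewrite (ler_nat R 2 k).
have h := @le_ln1Dx R (k%:R^-1 - 1).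
have hi : 0 < k%:R^-1 :> R by rewrite invr_gt0.
rewrite addrCA subrr addr0 lnV ?posrE // in h.
have : k%:R^-1 <= 1/2 :> R.
  by rewrite mul1r lef_pV2 ?posrE //; lra.
move: (h ltac:(lra)); lra.
Qed.

Lemma alpha_bound (R : realType) (m U : nat) : `|alpha R m U| <= 9.
Proof.
rewrite /alpha.
case: (leqP 2 (m * U)) => h.
  have hl := @ln_nat_bound R _ h.
  have hp : 0 < 1000 * ln ((m * U)%:R : R) by lra.
  rewrite ger0_norm; last by rewrite divr_ge0 // ltW.
  rewrite ler_pdivrMr //; lra.
have : ln ((m * U)%:R : R) = 0.
  move: h; case: (m * U)%N => [|[|//]] _; first by rewrite ln0.
  by rewrite ln1.
by move=> ->; rewrite mulr0 invr0 mulr0 normr0.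
Qed.

Theorem lemma4p8 (R : realType) (n m U : nat) (tl hd : 'I_m -> 'I_n)
  (d : 'I_n -> int) (lo hi c : 'I_m -> int)
  (Hd : forall v, `|d v| <= U%:Z) (Hlo : forall e, `|lo e| <= U%:Z)
  (Hhi : forall e, `|hi e| <= U%:Z) (Hc : forall e, `|c e| <= U%:Z)
  (Fs : R) (HFs : is_opt_value tl hd d lo hi c Fs)
  (f : 'I_m -> R) (Hf : forall e, (lo e)%:~R < f e < (hi e)%:~R)
  (Hgap : Fs < dot (intv R c) f)
  (gt : 'I_m -> R) (eps : R) (Heps : 0 < eps <= 1 / 2)
  (Hgt : forall e, `|(ell U lo hi f e)^-1 * (gt e - grad U lo hi c Fs f e)| <= eps)
  (lt : 'I_m -> R) (Hlt_pos : forall e, 0 < lt e)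
  (Hlt : approx 2 lt (ell U lo hi f))
  (Delta : 'I_m -> R) (HDelta : forall v, BT tl hd Delta v = 0)
  (kappa : R) (Hkappa : 0 < kappa < 1)
  (Hdesc : dot gt Delta / wnorm1 lt Delta <= - kappa) :
  `|dot (intv R c) Delta| / (dot (intv R c) f - Fs)
    <= `|dot gt Delta| / (kappa * m%:R).
Proof.
case: (posnP m) => [m0|mpos].
  subst m; rewrite /dot big_ord0 normr0 mul0r.
  by rewrite divr_ge0 // ?normr_ge0 // mulr0.
set gap := dot (intv R c) f - Fs.
have gapp : 0 < gap by rewrite /gap subr_gt0.
set A := dot (intv R c) Delta.
set G := dot gt Delta.
set W := wnorm1 lt Delta.
set al := alpha R m U.
have hal : `|al| <= 9 := alpha_bound R m U.
set K := 20 * m%:R * gap^-1.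
move: Hdesc; rewrite -/G -/W => Hdesc.
have W0 : 0 <= W by apply: sumr_ge0 => e _; exact: normr_ge0.
have Wp : 0 < W.
  rewrite lt_neqAle W0 andbT; apply/eqP => W00.
  by move: Hdesc; rewrite -W00 invr0 mulr0; case/andP: Hkappa => k0 _; lra.
have hG : kappa * W <= `|G|.
  move: Hdesc; rewrite ler_pdivrMr // => h.
  rewrite ler0_norm; last by case/andP: Hkappa => k0 _; nra.
  lra.
have ellp : forall e, 0 < ell U lo hi f e.
  move=> e; case/andP: (Hf e) => h1 h2.
  by rewrite /ell addr_gt0 // powR_gt0 // subr_gt0.
have hterm : forall e, `|gt e * Delta e - K * ((c e)%:~R * Delta e)|
    <= (eps + `|al|) * (ell U lo hi f e * `|Delta e|).
  move=> e.
  have -> : gt e * Delta e - K * ((c e)%:~R * Delta e)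
     = ((gt e - grad U lo hi c Fs f e) + (al * powR ((hi e)%:~R - f e) (-1 - al)
         - al * powR (f e - (lo e)%:~R) (-1 - al))) * Delta e.
    rewrite /grad /K -/gap -/al; ring.
  rewrite normrM mulrA ler_wpM2r //.
  have h1 : `|gt e - grad U lo hi c Fs f e| <= eps * ell U lo hi f e.
    have ie : 0 <= (ell U lo hi f e)^-1 by rewrite invr_ge0 ltW.
    move: (Hgt e); rewrite normrM (ger0_norm ie) => hh.
    rewrite -ler_pdivrMr //; by rewrite mulrC.
  have h2 : `|al * powR ((hi e)%:~R - f e) (-1 - al) - al * powR (f e - (lo e)%:~R) (-1 - al)|
      <= `|al| * ell U lo hi f e.
    rewrite -mulrBr normrM ler_wpM2l // /ell -/al.
    apply: (le_trans (ler_normB _ _)).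
    by rewrite !ger0_norm ?powR_ge0.
  apply: (le_trans (ler_normD _ _)); lra.
have hsum : G - K * A = \sum_(e < m) (gt e * Delta e - K * ((c e)%:~R * Delta e)).
  by rewrite sumrB /A /dot mulr_sumr.
have hS : `|G - K * A| <= (eps + `|al|) * (2 * W).
  rewrite hsum; apply: (le_trans (ler_norm_sum _ _ _)).
  rewrite /W /wnorm1 !mulr_sumr; apply: ler_sum => e _.
  apply: (le_trans (hterm e)); rewrite ler_wpM2l //; first by rewrite addr_ge0 // ltW; case/andP: Heps.
  rewrite normrM (ger0_norm (ltW (Hlt_pos e))) mulrA ler_wpM2r //.
  by case/andP: (Hlt e) => h _; move: h; lra.
have hKA : K * `|A| <= `|G| + (eps + `|al|) * (2 * W).
  have K0 : 0 <= K by rewrite /K mulr_ge0 // ?mulr_ge0 // invr_ge0 ltW.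
  have -> : K * `|A| = `|K * A| by rewrite normrM (ger0_norm K0).
  have : `|K * A| <= `|G| + `|G - K * A|.
    have e : G - (G - K * A) = K * A by ring.
    by have := ler_normB G (G - K * A); rewrite e.
  lra.
have mp : 0 < m%:R :> R by rewrite ltr0n.
case/andP: Hkappa => k0 k1.
case/andP: Heps => e0 e1.
rewrite ler_pdivlMr ?mulr_gt0 //.
set X := `|A| / gap.
have eK : K * `|A| = 20 * m%:R * X by rewrite /K /X; ring.
rewrite eK in hKA.
have h3 : (eps + `|al|) * (2 * W) <= 19 * W by nra.
have h4 : 20 * m%:R * X <= `|G| + 19 * W by lra.
have h5 : kappa * (20 * m%:R * X) <= kappa * (`|G| + 19 * W) by rewrite ler_wpM2l // ltW.
have g0 := normr_ge0 G.
have h6 : kappa * `|G| <= `|G| by nra.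
nra.
Qed.
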